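(* For every positive integer $n$, the poset $\widetilde\Pi(D_n)$ is a lattice.
   Context: For a positive integer $n$, $D_n=\langle r,s\mid r^n=e,\ s^2=e,\ srs^{-1}=r^{-1}\rangle$ is the dihedral group of order $2n$. For a finite group $G$ and a subgroup $H\le G$, let $\pi_e(H)=\{o(x)\mid x\in H\}$. Let $\mathcal{L}(G)$ be the set of subgroups of $G$; define $H_1\equiv H_2$ iff $\pi_e(H_1)=\pi_e(H_2)$, with class $[H]$. The poset $\widetilde\Pi(G)$ is $\mathcal{L}(G)/\!\equiv$ ordered by $[H_1]\lesssim[H_2]$ iff $\pi_e(H_1)\subseteq\pi_e(H_2)$. *)

(* Defs.v *)
From mathcomp Require Import all_boot all_fingroup.
Set Implicit Arguments. Unset Strict Implicit. Unset Printing Implicit Defensive.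
Local Open Scope group_scope.

Definition pi_e (gT : finGroupType) (H : {set gT}) : pred nat :=
  fun k => [exists x in H, #[x] == k].

Definition spec_le (gT : finGroupType) (H1 H2 : {set gT}) : Prop :=
  forall k, pi_e H1 k -> pi_e H2 k.

(* The poset  ~Pi(G) = L(G)/== , ordered by spec_le, is a lattice: any two
   classes [H1],[H2] have a least upper bound and a greatest lower bound,
   i.e. there are subgroups J, M of G whose classes are the join and meet. *)
Definition spec_poset_is_lattice (gT : finGroupType) (G : {group gT}) : Prop :=
  forall H1 H2 : {group gT}, H1 \subset G -> H2 \subset G ->
    (exists2 J : {group gT}, J \subset G &
       [/\ spec_le H1 J, spec_le H2 J &
           forall K : {group gT}, K \subset G ->
             spec_le H1 K -> spec_le H2 K -> spec_le J K]) /\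
    (exists2 M : {group gT}, M \subset G &
       [/\ spec_le M H1, spec_le M H2 &
           forall K : {group gT}, K \subset G ->
             spec_le K H1 -> spec_le K H2 -> spec_le K M]).

(* Main.v *)
Require Import Defs.
From mathcomp Require Import all_boot all_fingroup all_solvable.
Local Open Scope group_scope.
Lemma dihedral_struct (gT : finGroupType) (G : {group gT}) r s :
  <[r]> <*> <[s]> = G -> s ^+ 2 = 1 -> s * r * s^-1 = r^-1 ->
  forall x, x \in G -> x \notin <[r]> ->
    x ^+ 2 = 1 /\ forall c, c \in <[r]> -> c ^ x = c^-1.
Proof.
move=> defG s2 rel.
have sV : s^-1 = s by apply/eqP; rewrite eq_invg_mul -expg2 s2.
have rs : r ^ s = r^-1 by rewrite conjgE mulgA -rel sV.
have cRs : forall c, c \in <[r]> -> c ^ s = c^-1.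
  by move=> c /cycleP [k ->]; rewrite conjXg rs expgVn.
have nRs : s \in 'N(<[r]>) by apply/normP; rewrite -cycleJ rs cycleV.
have defG' : G :=: <[r]> * <[s]> by rewrite -defG norm_joinEr // cycle_subG.
move=> x; rewrite defG' => /mulsgP [c v cR /cycleP [i ->] ->] xnR.
move: xnR; rewrite -(expg_mod i s2) modn2.
case: (odd i) => /= xnR; last by rewrite expg0 mulg1 cR in xnR.
rewrite expg1; split.
  rewrite expg2 -mulgA -{1}sV -conjgE cRs // mulgV //.
move=> d dR; rewrite conjgM.
have -> : d ^ c = d.
  move: dR cR => /cycleP [j ->] /cycleP [k ->].
  by rewrite conjgE (commuteX2 j k (commute_refl r)) mulKg.
exact: cRs.
Qed.

Section S.
Variable gT : finGroupType.
Implicit Types H K : {group gT}.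

Lemma pi_eP (A : {set gT}) k :
  reflect (exists2 x, x \in A & #[x] = k) (pi_e A k).
Proof.
apply: (iffP existsP) => [[x /andP [xA /eqP]]|[x xA <-]].
  by exists x.
by exists x; rewrite xA eqxx.
Qed.

Lemma pi_e1 H : pi_e H 1%N.
Proof. by apply/pi_eP; exists 1; rewrite ?group1 ?order1. Qed.

Lemma pi_e_sub {A B : {set gT}} {k} : A \subset B -> pi_e A k -> pi_e B k.
Proof. by move=> sAB /pi_eP [x xA <-]; apply/pi_eP; exists x; rewrite ?(subsetP sAB). Qed.

Lemma order_le2 (x : gT) : x ^+ 2 = 1 -> #[x] = 1%N \/ #[x] = 2.
Proof.
move=> x2; have : #[x] %| 2 by rewrite order_dvdn x2.
have := order_gt0 x.
by case: #[x] => [|[|[|m]]] //=; auto.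
Qed.

Lemma meet_exists (G : {group gT}) (r : gT) :
  (forall x, x \in G -> x \notin <[r]> ->
    x ^+ 2 = 1 /\ forall c, c \in <[r]> -> c ^ x = c^-1) ->
  forall H1 H2, H1 \subset G -> H2 \subset G ->
  exists2 M : {group gT}, M \subset G & forall k, pi_e M k = pi_e H1 k && pi_e H2 k.
Proof.
move=> hR H1 H2 sH1 sH2.
set R := <[r]>.
pose C := (H1 :&: H2 :&: R)%G.
have sC1 : C \subset H1 by apply/subsetP => x; rewrite !inE => /andP [/andP [] ].
have sC2 : C \subset H2 by apply/subsetP => x; rewrite !inE => /andP [/andP [] ].
have sCG : C \subset G by apply: subset_trans sH1.
have lemA : forall x y, x \in H1 -> x \in R -> y \in H2 -> y \in R -> #[x] = #[y] -> x \in C.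
  move=> x y xH1 xR yH2 yR oxy.
  have : <[x]> == <[y]> :> {set gT}.
    rewrite (eq_subG_cyclic (cycle_cyclic r)) ?cycle_subG //; exact/eqP.
  move/eqP => exy.
  have xy : x \in <[y]> by rewrite -exy cycle_id.
  have sy : <[y]> \subset H2 by rewrite cycle_subG.
  by rewrite !inE xH1 xR (subsetP sy).
have key : forall k, pi_e H1 k -> pi_e H2 k -> pi_e C k \/ k = 2.
  move=> k /pi_eP [x xH1 <-] /pi_eP [y yH2 oxy].
  have small : forall z, z \in G -> z \notin R -> #[z] = 1%N \/ #[z] = 2.
    by move=> z zG zR; apply: order_le2; case: (hR z zG zR).
  case: (boolP (x \in R)) => xR; last first.
    case: (small x (subsetP sH1 x xH1) xR) => ->; last by right.
    by left; apply: pi_e1.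
  case: (boolP (y \in R)) => yR; last first.
    rewrite -oxy; case: (small y (subsetP sH2 y yH2) yR) => ->; last by right.
    by left; apply: pi_e1.
  by left; apply/pi_eP; exists x => //; apply: (lemA x y).
have Cboth : forall k, pi_e C k -> pi_e H1 k && pi_e H2 k.
  by move=> k Ck; rewrite (pi_e_sub sC1 Ck) (pi_e_sub sC2 Ck).
case E : (pi_e C 2 || ~~ (pi_e H1 2 && pi_e H2 2)).
  exists C; first done.
  move=> k; apply/idP/idP; first exact: Cboth.
  case/andP => k1 k2; case: (key k k1 k2) => // ek.
  by move: E; rewrite -ek k1 k2 orbF.
move: E; case/norP => nC2; rewrite negbK => /andP [/pi_eP [t tH1 ot] /pi_eP [u uH2 ou]].
have [w [wG wR ow]] : exists w, [/\ w \in G, w \notin R & #[w] = 2].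
  case: (boolP (t \in R)) => tR; last by exists t; split; rewrite ?(subsetP sH1).
  case: (boolP (u \in R)) => uR; last by exists u; split; rewrite ?(subsetP sH2).
  case/negP: nC2; apply/pi_eP; exists t => //.
  by apply: (lemA t u) => //; rewrite ot ou.
have [w2 cw] := hR w wG wR.
have nCw : <[w]> \subset 'N(C).
  rewrite cycle_subG; apply/normP; apply/eqP; rewrite eqEcard cardJg leqnn andbT.
  apply/subsetP => _ /imsetP [c cC ->].
  have cR : c \in R by move: cC; rewrite !inE => /andP [].
  by rewrite cw // groupV.
have both2 : pi_e H1 2 && pi_e H2 2.
  by apply/andP; split; apply/pi_eP; [exists t | exists u].
exists (C <*> <[w]>)%G; first by rewrite join_subG sCG cycle_subG.
move=> k; apply/idP/idP.
  move/pi_eP => [x]; rewrite /= norm_joinEr //.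
  move=> /mulsgP [c v cC /cycleP [i ->] ->] <-.
  have cR : c \in R by move: cC; rewrite !inE => /andP [].
  rewrite -(expg_mod i w2) modn2; case: (odd i) => /=; last first.
    by rewrite expg0 mulg1; apply: Cboth; apply/pi_eP; exists c.
  rewrite expg1.
  have cwnR : c * w \notin R.
    apply: contra wR => cwR; by rewrite -(mulKg c w) groupM ?groupV.
  have cwG : c * w \in G by rewrite groupM // (subsetP sCG).
  case: (order_le2 _ (hR _ cwG cwnR).1) => ->; last by [].
  by apply: Cboth; apply: pi_e1.
case/andP => k1 k2; case: (key k k1 k2) => [Ck|->].
  exact: pi_e_sub (joing_subl _ _) Ck.
apply/pi_eP; exists w => //; apply: (subsetP (joing_subr _ _)); exact: cycle_id.
Qed.

Definition piS (A : {set gT}) : {set 'I_(#|gT|.+1)} := [set i : 'I_(#|gT|.+1) | pi_e A i].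

Lemma pi_e_bound {A : {set gT}} {k} : pi_e A k -> k < #|gT|.+1.
Proof. by move=> /pi_eP [x _ <-]; rewrite ltnS max_card. Qed.

Lemma piS_spec (A B : {set gT}) : piS A \subset piS B -> spec_le A B.
Proof.
move=> s k kA; have kb := pi_e_bound kA.
by have := subsetP s (Ordinal kb); rewrite !inE /=; apply.
Qed.

Lemma spec_piS (A B : {set gT}) : spec_le A B -> piS A \subset piS B.
Proof. by move=> l; apply/subsetP => i; rewrite !inE; apply: l. Qed.

Lemma lattice_of_meet (G : {group gT}) :
  (forall H1 H2 : {group gT}, H1 \subset G -> H2 \subset G ->
    exists2 M : {group gT}, M \subset G &
      forall k, pi_e M k = pi_e H1 k && pi_e H2 k) ->
  spec_poset_is_lattice G.
Proof.
move=> hM H1 H2 sH1 sH2; split; last first.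
  have [M sMG eM] := hM H1 H2 sH1 sH2; exists M => //; split.
  - by move=> k; rewrite eM => /andP [].
  - by move=> k; rewrite eM => /andP [].
  by move=> K sKG l1 l2 k kK; rewrite eM (l1 k kK) (l2 k kK).
pose up (K : {group gT}) := (K \subset G) && (piS H1 :|: piS H2 \subset piS K).
have upG : up G.
  rewrite /up subxx /= subUset; apply/andP; split; apply: spec_piS => k;
    apply: pi_e_sub; by [].
case: (arg_minnP (fun K : {group gT} => #|piS K|) upG) => J /andP [sJG uJ] minJ.
rewrite subUset in uJ; case/andP: uJ => u1 u2.
exists J => //; split; try exact: piS_spec.
move=> K sKG l1 l2.
have [M sMG eM] := hM J K sJG sKG.
have sMJ : piS M \subset piS J by apply/subsetP => i; rewrite !inE eM => /andP [].
have upM : up M.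
  rewrite /up sMG subUset /=; apply/andP; split; apply/subsetP => i; rewrite !inE eM => hi; apply/andP; split.
  - by have := subsetP u1 i; rewrite !inE; apply.
  - exact: l1.
  - by have := subsetP u2 i; rewrite !inE; apply.
  - exact: l2.
have := minJ M upM => le.
have eJM : piS M == piS J by rewrite eqEcard sMJ le.
have lJM : spec_le J M by apply: piS_spec; rewrite (eqP eJM).
by move=> k kJ; have := lJM k kJ; rewrite eM => /andP [].
Qed.
End S.

Theorem theorem2p5 (n : nat) (gT : finGroupType) (G : {group gT}) :
  0 < n ->
  G \isog Grp (r : s : r ^+ n, s ^+ 2, s * r * s^-1 = r^-1) ->
  spec_poset_is_lattice G.
Proof.
move=> _ /isoGrp_hom /existsP [[r s]] /= /eqP [defG _ s2 rel].
apply: lattice_of_meet => H1 H2.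
exact: (@meet_exists gT G r (@dihedral_struct gT G r s defG s2 rel) H1 H2).
Qed.
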